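(* Let $X$ be a separated metric compact Hausdorff space with metric $d$, and let $\gamma$ be a binary continuous submetric on $X$. Then $\gamma$ is an equivalence continuous submetric if and only if for all $x,y\in X$ and $i,j\in\{0,1\}$, $$d(x,y)\le\gamma((x,i),(y,j))=\gamma((x,1-i),(y,1-j))$$ and $$\gamma((x,i),(y,1-i))=\inf_{z\in X}\big(\gamma((x,i),(z,1-i))+\gamma((z,i),(y,1-i))\big).$$
   Context: A metric on a set $X$ is a map $d\colon X\times X\to[0,\infty]$ with $d(x,x)=0$ and $d(x,z)\le d(x,y)+d(y,z)$ (not necessarily symmetric, $\infty$ allowed); separated means $d(x,y)=0=d(y,x)$ implies $x=y$. A separated metric compact Hausdorff space is a compact Hausdorff space with a separated metric continuous $X\times X\to[0,\infty]$ for the upper topology on $[0,\infty]$ (open sets $]u,\infty]$); $\mathbf{MetCH_{sep}}$ is the category of these with continuous non-expansive maps. $X+X$ is the coproduct, with elements written $(x,i)$, $x\in X$, $i\in\{0,1\}$, coproduct topology and metric $d((x,i),(y,i))=d(x,y)$, $d((x,i),(y,1-i))=\infty$. A binary continuous submetric on $X$ is a (not necessarily separated) metric $\gamma$ on $X+X$, continuous for the upper topology, with $\gamma$ below the coproduct metric. Its associated binary corelation is $\binom{q_0}{q_1}\colon X+X\to S:=(X+X)/{\sim_\gamma}$, where $u\sim_\gamma v$ iff $\gamma(u,v)=\gamma(v,u)=0$, $S$ has quotient topology and metric $([u],[v])\mapsto\gamma(u,v)$, and $q_i(x)=[(x,i)]$. The corelation is reflexive if there is a morphism $e\colon S\to X$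 with $e q_0=e q_1=1_X$; symmetric if there is $s\colon S\to S$ with $s q_0=q_1$, $s q_1=q_0$; transitive if, with $\lambda_0,\lambda_1\colon S\to P$ the pushout of $q_1$ and $q_0$ (so $\lambda_0 q_1=\lambda_1 q_0$), there is $t\colon S\to P$ with $t q_0=\lambda_0 q_0$, $t q_1=\lambda_1 q_1$. $\gamma$ is an equivalence continuous submetric if its corelation is reflexive, symmetric and transitive. *)

(* Defs.v *)
From HB Require Import structures.
From mathcomp Require Import all_boot all_order all_algebra.
From mathcomp Require Import all_classical all_reals all_analysis.
From mathcomp Require Import generic_quotient.
Local Open Scope quotient_scope.
Set Implicit Arguments. Unset Strict Implicit. Unset Printing Implicit Defensive.
Import Order.TTheory GRing.Theory Num.Theory.
Local Open Scope classical_set_scope.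
Local Open Scope ring_scope.
Local Open Scope ereal_scope.

Section Defs.
Context {R : realType}.

Definition is_metric (T : Type) (d : T -> T -> \bar R) : Prop :=
  [/\ forall x, d x x = 0,
      forall x y z, d x z <= d x y + d y z &
      forall x y, 0 <= d x y].

Definition separated (T : Type) (d : T -> T -> \bar R) : Prop :=
  forall x y, d x y = 0 -> d y x = 0 -> x = y.

Definition upper_continuous (T : topologicalType) (d : T -> T -> \bar R) : Prop :=
  forall u : R, open [set p : T * T | u%:E < d p.1 p.2].
End Defs.

Record MetCH (R : realType) := MkMetCH {
  mc_sort :> topologicalType;
  mc_d : mc_sort -> mc_sort -> \bar R;
  mc_compact : compact [set: mc_sort];
  mc_hausdorff : hausdorff_space mc_sort;
  mc_is_metric : is_metric mc_d;
  mc_separated : separated mc_d;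
  mc_continuous : upper_continuous mc_d }.
Arguments mc_d {R} m _ _.

Definition is_mor {R : realType} (T1 T2 : topologicalType)
  (d1 : T1 -> T1 -> \bar R) (d2 : T2 -> T2 -> \bar R) (f : T1 -> T2) : Prop :=
  continuous f /\ forall x y, d2 (f x) (f y) <= d1 x y.

Definition cop (X : topologicalType) : topologicalType :=
  {i : bool & (fun _ : bool => X) i}.

Definition cop_d {R : realType} (X : MetCH R) (u v : cop (mc_sort X)) : \bar R :=
  if tag u == tag v then mc_d X (projT2 u) (projT2 v) else +oo.


Record bin_submetric (R : realType) (X : MetCH R) := MkBinSubmetric {
  bs_g :> cop (mc_sort X) -> cop (mc_sort X) -> \bar R;
  bs_is_metric : is_metric bs_g;
  bs_continuous : upper_continuous bs_g;
  bs_below : forall u v, bs_g u v <= cop_d u v }.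

Section Corelation.
Context {R : realType} (X : MetCH R) (g : bin_submetric X).

Definition sim_g (u v : cop (mc_sort X)) : bool := (g u v == 0) && (g v u == 0).

Lemma sim_g_refl : reflexive sim_g.
Proof. by move=> u; rewrite /sim_g; case: (bs_is_metric g) => -> _ _; rewrite eqxx. Qed.

Lemma sim_g_sym : symmetric sim_g.
Proof. by move=> u v; rewrite /sim_g andbC. Qed.

Lemma sim_g_trans : transitive sim_g.
Proof.
have [_ tr ge0] := bs_is_metric g.
have H a b c : g a b = 0 -> g b c = 0 -> g a c = 0.
  move=> ab bc; apply/eqP; rewrite eq_le ge0 andbT.
  by have := tr a b c; rewrite ab bc adde0.
move=> v u w /andP[/eqP uv /eqP vu] /andP[/eqP vw /eqP wv].
by rewrite /sim_g (H _ _ _ uv vw) (H _ _ _ wv vu) eqxx.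
Qed.

Definition sim_g_equiv := EquivRel sim_g sim_g_refl sim_g_sym sim_g_trans.

(** The codomain S := (X + X)/~_g of the associated corelation,
    with the quotient topology ... *)
Definition corel_S : topologicalType :=
  quotient_topology {eq_quot sim_g_equiv}.

(** ... and the metric ([u],[v]) |-> g(u,v) (independent of representatives). *)
Definition corel_d (a b : corel_S) : \bar R := g (repr a) (repr b).

Definition corel_q (i : bool) (x : mc_sort X) : corel_S :=
  \pi_{eq_quot sim_g_equiv} (existT (fun _ : bool => mc_sort X) i x).

End Corelation.
Arguments corel_d {R X} g _ _.
Arguments corel_q {R X} g i x.

Section Properties.
Context {R : realType} (X : MetCH R) (g : bin_submetric X).
Local Notation S := (corel_S g).
Local Notation dS := (corel_d g).
Local Notation q0 := (corel_q g false).
Local Notation q1 := (corel_q g true).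

Definition corel_reflexive : Prop :=
  exists e : S -> mc_sort X, is_mor dS (mc_d X) e /\
    forall x, e (q0 x) = x /\ e (q1 x) = x.

Definition corel_symmetric : Prop :=
  exists s : S -> S, is_mor dS dS s /\
    forall x, s (q0 x) = q1 x /\ s (q1 x) = q0 x.

Definition is_pushout (P : MetCH R) (l0 l1 : S -> mc_sort P) : Prop :=
  [/\ is_mor dS (mc_d P) l0, is_mor dS (mc_d P) l1,
      (forall x, l0 (q1 x) = l1 (q0 x)) &
      forall (Y : MetCH R) (f0 f1 : S -> mc_sort Y),
        is_mor dS (mc_d Y) f0 -> is_mor dS (mc_d Y) f1 ->
        (forall x, f0 (q1 x) = f1 (q0 x)) ->
        exists h : mc_sort P -> mc_sort Y,
          [/\ is_mor (mc_d P) (mc_d Y) h,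
              (forall a, h (l0 a) = f0 a), (forall a, h (l1 a) = f1 a) &
              forall h' : mc_sort P -> mc_sort Y, is_mor (mc_d P) (mc_d Y) h' ->
                (forall a, h' (l0 a) = f0 a) -> (forall a, h' (l1 a) = f1 a) ->
                h' = h]].

Definition corel_transitive : Prop :=
  exists (P : MetCH R) (l0 l1 : S -> mc_sort P), is_pushout l0 l1 /\
    exists t : S -> mc_sort P, is_mor dS (mc_d P) t /\
      forall x, t (q0 x) = l0 (q0 x) /\ t (q1 x) = l1 (q1 x).

Definition equivalence_submetric : Prop :=
  [/\ corel_reflexive, corel_symmetric & corel_transitive].
End Properties.
Arguments corel_reflexive {R X} g.
Arguments corel_symmetric {R X} g.
Arguments is_pushout {R X} g P l0 l1.
Arguments corel_transitive {R X} g.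
Arguments equivalence_submetric {R X} g.

Definition cpt {X : topologicalType} (x : X) (i : bool) : cop X :=
  existT (fun _ : bool => X) i x.

(* Main.v *)
Require Import Defs.
From HB Require Import structures.
From mathcomp Require Import all_boot all_order all_algebra.
From mathcomp Require Import all_classical all_reals all_analysis.
From mathcomp Require Import generic_quotient.
Set Implicit Arguments. Unset Strict Implicit. Unset Printing Implicit Defensive.
Import Order.TTheory GRing.Theory Num.Theory.
Local Open Scope classical_set_scope.
Local Open Scope ring_scope.
Local Open Scope ereal_scope.
Local Open Scope quotient_scope.

Lemma prod_hausdorff (U V : topologicalType) :
  hausdorff_space U -> hausdorff_space V -> hausdorff_space (U * V)%type.
Proof.
move=> hU hV [p1 p2] [q1 q2] cl.
congr pair; [apply: hU | apply: hV] => A B nA nB.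
- have [[x y] [[Ax _] [Bx _]]] := cl (A `*` setT) (B `*` setT)
    (ltac:(by exists (A, setT) => //; split => //; exact: filterT))
    (ltac:(by exists (B, setT) => //; split => //; exact: filterT)).
  by exists x.
- have [[x y] [[_ Ay] [_ By]]] := cl (setT `*` A) (setT `*` B)
    (ltac:(by exists (setT, A) => //; split => //; exact: filterT))
    (ltac:(by exists (setT, B) => //; split => //; exact: filterT)).
  by exists y.
Qed.

Section GenQuot.
Context {R : realType} (T : topologicalType) (dl : T -> T -> \bar R).
Context (dm : is_metric dl) (dc : upper_continuous dl).
Context (Tc : compact [set: T]) (Th : hausdorff_space T).

Let dl0 x : dl x x = 0. Proof. by case: dm. Qed.
Let dltr x y z : dl x z <= dl x y + dl y z. Proof. by case: dm. Qed.
Let dlge0 x y : 0 <= dl x y. Proof. by case: dm. Qed.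

Definition simd (u v : T) : bool := (dl u v == 0) && (dl v u == 0).

Lemma simd_refl : reflexive simd.
Proof. by move=> u; rewrite /simd dl0 eqxx. Qed.
Lemma simd_sym : symmetric simd.
Proof. by move=> u v; rewrite /simd andbC. Qed.
Lemma simd_trans : transitive simd.
Proof.
have H a b c : dl a b = 0 -> dl b c = 0 -> dl a c = 0.
  move=> ab bc; apply/eqP; rewrite eq_le dlge0 andbT.
  by have := dltr a b c; rewrite ab bc adde0.
move=> v u w /andP[/eqP uv /eqP vu] /andP[/eqP vw /eqP wv].
by rewrite /simd (H _ _ _ uv vw) (H _ _ _ wv vu) eqxx.
Qed.

Definition simdE := EquivRel simd simd_refl simd_sym simd_trans.
Definition QT : topologicalType := quotient_topology {eq_quot simdE}.
Definition dQ (a b : QT) : \bar R := dl (repr a) (repr b).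
Definition piQ (u : T) : QT := \pi_{eq_quot simdE} u.

Lemma simd_l u u' v : simd u u' -> dl u v = dl u' v.
Proof.
move=> /andP[/eqP h1 /eqP h2]; apply/eqP; rewrite eq_le.
have := dltr u u' v; have := dltr u' u v; rewrite h1 h2 !add0e => -> ->//.
Qed.
Lemma simd_r u v v' : simd v v' -> dl u v = dl u v'.
Proof.
move=> /andP[/eqP h1 /eqP h2]; apply/eqP; rewrite eq_le.
have := dltr u v v'; have := dltr u v' v; rewrite h1 h2 !adde0 => -> ->//.
Qed.

Lemma piQK (a : QT) : piQ (repr a) = a.
Proof. exact: reprK. Qed.

Lemma piQ_eq u v : (piQ u = piQ v) <-> simd u v.
Proof.
split => [h|h]; first by apply/(eqquotP {eq_quot simdE}).
by apply/(eqquotP {eq_quot simdE}).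
Qed.

Lemma repr_piQ u : simd (repr (piQ u)) u.
Proof. by apply/piQ_eq; rewrite piQK. Qed.

Lemma dQ_pi u v : dQ (piQ u) (piQ v) = dl u v.
Proof.
by rewrite /dQ (simd_l _ (repr_piQ u)) (simd_r _ (repr_piQ v)).
Qed.

Lemma piQ_cont : continuous piQ.
Proof. exact: pi_continuous. Qed.


Lemma cont_pairl (u : T) : continuous (fun w : T => (u, w)).
Proof. move=> w; apply: cvg_pair; [exact: cvg_cst | exact: cvg_id]. Qed.
Lemma cont_pairr (u : T) : continuous (fun w : T => (w, u)).
Proof. move=> w; apply: cvg_pair; [exact: cvg_id | exact: cvg_cst]. Qed.

Lemma open_gt_l (c : R) (u : T) : open [set w | c%:E < dl u w].
Proof.
have -> : [set w | c%:E < dl u w] =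
  (fun w => (u, w)) @^-1` [set p : T * T | c%:E < dl p.1 p.2] by [].
by apply: open_comp; [move=> w _; exact: cont_pairl | exact: dc].
Qed.
Lemma open_gt_r (c : R) (u : T) : open [set w | c%:E < dl w u].
Proof.
have -> : [set w | c%:E < dl w u] =
  (fun w => (w, u)) @^-1` [set p : T * T | c%:E < dl p.1 p.2] by [].
by apply: open_comp; [move=> w _; exact: cont_pairr | exact: dc].
Qed.

Lemma nsimdP u v : ~~ simd u v <-> (0 < dl u v \/ 0 < dl v u).
Proof.
rewrite /simd !lt_def !dlge0 !andbT negb_and.
by split => [/orP|[]->]; rewrite ?orbT.
Qed.

Lemma closed_cls u : closed [set w | simd u w].
Proof.
have -> : [set w | simd u w] =
   ~` ([set w | (0:R)%:E < dl u w] `|` [set w | (0:R)%:E < dl w u]).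
  apply/seteqP; split => w /=.
    by move=> s hh; have := (nsimdP u w).2 hh; rewrite s.
  move=> h; apply/negPn/negP => /nsimdP [] h'; apply: h; [left|right] => //.
by apply: open_closedC; apply: openU; [exact: open_gt_l | exact: open_gt_r].
Qed.


Lemma closed_sim : closed [set p : T * T | simd p.1 p.2].
Proof.
have -> : [set p : T * T | simd p.1 p.2] =
   ~` ([set p : T * T | (0:R)%:E < dl p.1 p.2] `|`
       (unstable.swap @^-1` [set p : T * T | (0:R)%:E < dl p.1 p.2])).
  apply/seteqP; split => p /=.
    by move=> s hh; have := (nsimdP p.1 p.2).2 hh; rewrite s.
  move=> h; apply/negPn/negP => /nsimdP [] h'; apply: h; [left|right] => //.
apply: open_closedC; apply: openU; first exact: dc.
by apply: open_comp; [move=> p _; exact: swap_continuous | exact: dc].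
Qed.

Lemma fst_cont (U V : topologicalType) : continuous (@fst U V).
Proof. by move=> [a b]; exact: cvg_fst. Qed.
Lemma snd_cont (U V : topologicalType) : continuous (@snd U V).
Proof. by move=> [a b]; exact: cvg_snd. Qed.

Lemma closed_sat (F : set T) : closed F ->
  closed [set w | exists2 w', F w' & simd w w'].
Proof.
move=> cF.
have -> : [set w | exists2 w', F w' & simd w w'] =
    fst @` ([set p : T * T | simd p.1 p.2] `&` (snd @^-1` F)).
  apply/seteqP; split => [w [w' Fw' s]|_ [[w w'] [/= s Fw'] <-]].
    by exists (w, w').
  by exists w'.
apply: compact_closed => //; apply: continuous_compact.
  exact/continuous_subspaceT/fst_cont.
apply: (subclosed_compact _ (compact_setX Tc Tc)) => //.
apply: closedI; first exact: closed_sim.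
by apply: preimage_closed => // p _; exact: snd_cont.
Qed.

Lemma QT_compact : compact [set: QT].
Proof.
have -> : [set: QT] = piQ @` [set: T].
  by apply/seteqP; split => // a _; exists (repr a) => //; rewrite piQK.
by apply: continuous_compact => //; exact/continuous_subspaceT/piQ_cont.
Qed.


Definition shr (W : set T) := [set w | forall w', simd w w' -> W w'].

Lemma open_shr W : open W -> open (shr W).
Proof.
move=> oW.
have -> : shr W = ~` [set w | exists2 w', (~` W) w' & simd w w'].
  apply/seteqP; split => w /=.
    by move=> h [w' nW s]; apply: nW; exact: h.
  by move=> h w' s; apply/not_notP => nW; apply: h; exists w'.
by apply: closed_openC; apply: closed_sat; exact: open_closedC.
Qed.

Lemma open_img_shr W : open W -> open (piQ @` shr W : set QT).
Proof.
move=> oW.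
have e : piQ @^-1` (piQ @` shr W) = shr W.
  apply/seteqP; split => w /=; last by move=> h; exists w.
  move=> [w' h /piQ_eq s] w'' s'; apply: h.
  exact: (@simd_trans _ _ _ s s').
have : open (piQ @^-1` (piQ @` shr W)) by rewrite e; exact: open_shr.
by [].
Qed.

Lemma QT_hausdorff : hausdorff_space QT.
Proof.
rewrite open_hausdorff => a b ab.
pose u := repr a; pose v := repr b.
have nuv : ~~ simd u v.
  apply/negP => s; move/eqP: ab; apply.
  by rewrite -(piQK a) -(piQK b); apply/piQ_eq.
pose Cu := [set w | simd u w]; pose Cv := [set w | simd v w].
have CuCv : Cu `<=` ~` Cv.
  move=> w /= uw vw; move/negP: nuv; apply.
  by apply: (@simd_trans _ _ _ uw); rewrite simd_sym.
have snb : set_nbhs Cu (~` Cv).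
  apply/set_nbhsP; exists (~` Cv); split => //.
  exact/closed_openC/(@closed_cls v).
have [C nC cC] := @compact_normal _ Th Tc Cu (@closed_cls u) _ snb.
pose U0 := interior C; pose V0 := ~` closure C.
have oU0 : open U0 by exact: open_interior.
have oV0 : open V0 by exact/closed_openC/closed_closure.
have CuU0 : Cu `<=` U0 by move=> w Cw; exact: nC.
have CvV0 : Cv `<=` V0 by move=> w Cw /cC; apply.
have UV0 : forall w, U0 w -> V0 w -> False.
  by move=> w /interior_subset Cw; apply; exact: subset_closure.
exists (piQ @` shr U0, piQ @` shr V0) => /=.
  split; rewrite inE.
    by exists u; [move=> w' s; exact: CuU0 | exact: piQK].
  by exists v; [move=> w' s; exact: CvV0 | exact: piQK].
split; [exact: open_img_shr | exact: open_img_shr |].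
apply/eqP/seteqP; split => // x [[w1 h1 <-] [w2 h2 /piQ_eq e]].
by apply: (UV0 w1); [apply: h1; exact: simd_refl | apply: h2].
Qed.



Lemma dQ_cont : upper_continuous dQ.
Proof.
move=> c.
pose E := [set p : T * T | dl p.1 p.2 <= c%:E].
pose pp := fun p : T * T => (piQ p.1, piQ p.2).
have -> : [set p : QT * QT | c%:E < dQ p.1 p.2] = ~` (pp @` E).
  apply/seteqP; split => [[a b] /= h [[w1 w2] /= hE [e1 e2]]| [a b] /= h].
    by move: h; rewrite -e1 -e2 dQ_pi ltNge hE.
  rewrite ltNge; apply/negP => hle; apply: h; exists (repr a, repr b) => //=.
  by rewrite /pp /= !piQK.
apply: closed_openC; apply: compact_closed.
  by apply: prod_hausdorff; exact: QT_hausdorff.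
apply: continuous_compact.
  apply: continuous_subspaceT => p; rewrite /pp.
  apply: (@cvg_pair _ _ _ _ (nbhs (piQ p.1)) (nbhs (piQ p.2))).
    by apply: cvg_comp; [exact: cvg_fst | exact: piQ_cont].
  by apply: cvg_comp; [exact: cvg_snd | exact: piQ_cont].
apply: (subclosed_compact _ (compact_setX Tc Tc)) => //.
have -> : E = ~` [set p : T * T | c%:E < dl p.1 p.2].
  apply/seteqP; split => p /=; first by move=> h; rewrite ltNge h.
  by move/negP; rewrite -leNgt.
exact/open_closedC/dc.
Qed.

Lemma dQ_metric : is_metric dQ.
Proof. by split => *; rewrite /dQ. Qed.

Lemma dQ_sep : Defs.separated dQ.
Proof.
move=> a b h1 h2; rewrite -(piQK a) -(piQK b); apply/piQ_eq.
by rewrite /simd -/(dQ a b) -/(dQ b a) h1 h2 eqxx.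
Qed.

Definition QMet : MetCH R :=
  @MkMetCH R QT dQ QT_compact QT_hausdorff dQ_metric dQ_sep dQ_cont.

End GenQuot.


Lemma infL {R : realType} (T : Type) (a c : \bar R) (f : T -> \bar R) :
  0 <= a -> (forall z, 0 <= f z) -> (forall z, c <= a + f z) ->
  c <= a + ereal_inf [set f z | z in [set: T]].
Proof.
move=> ha hf h.
have i0 : 0 <= ereal_inf [set f z | z in [set: T]].
  by apply: le_ereal_inf_tmp => _ [z _ <-]; exact: hf.
case: a ha h => [r| |] ha h.
- rewrite -leeBlDl //; apply: le_ereal_inf_tmp => _ [z _ <-].
  by rewrite leeBlDl //; exact: h.
- rewrite addye ?leey //.
  by apply/negP => /eqP e; move: i0; rewrite e.
- by move: ha.
Qed.

Lemma infR {R : realType} (T : Type) (a c : \bar R) (f : T -> \bar R) :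
  0 <= a -> (forall z, 0 <= f z) -> (forall z, c <= f z + a) ->
  c <= ereal_inf [set f z | z in [set: T]] + a.
Proof.
move=> ha hf h; rewrite addeC; apply: infL => // z; rewrite addeC; exact: h.
Qed.

From mathcomp Require Import lra.

Lemma exists_between {R : realType} (c : R) (e : \bar R) :
  c%:E < e -> exists v : R, (c < v)%R /\ v%:E < e.
Proof.
case: e => [r| |] //=.
- rewrite lte_fin => h; exists ((c + r) / 2)%R; rewrite lte_fin.
  split; lra.
- by move=> _; exists (c + 1)%R; split; [lra | exact: ltry].
Qed.

Lemma split_lt {R : realType} (v : R) (a b : \bar R) :
  0 <= a -> 0 <= b -> v%:E < a + b ->
  exists a' b' : R, [/\ a'%:E < a, b'%:E < b & (a' + b')%R = v].
Proof.
case: a => [r| |]; case: b => [s| |] //= ha hb.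
- rewrite -EFinD lte_fin => h.
  exists (r - (r + s - v) / 2)%R, (s - (r + s - v) / 2)%R.
  by rewrite !lte_fin; split; lra.
- move=> _; exists (r - 1)%R, (v - r + 1)%R.
  by rewrite !lte_fin ltry; split => //; lra.
- move=> _; exists (v - s + 1)%R, (s - 1)%R.
  by rewrite !lte_fin ltry; split => //; lra.
- move=> _; exists v, 0%R; rewrite !ltry; split => //; lra.
Qed.

Section Three.
Context {R : realType} (X : MetCH R) (g : bin_submetric X).
Context (Hsym : forall (x y : mc_sort X) i j,
   g (cpt x i) (cpt y j) = g (cpt x (~~ i)) (cpt y (~~ j))).

Let g0 u : g u u = 0. Proof. by case: (bs_is_metric g). Qed.
Let gtr u v w : g u w <= g u v + g v w. Proof. by case: (bs_is_metric g). Qed.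
Let gge0 u v : 0 <= g u v. Proof. by case: (bs_is_metric g). Qed.

Definition gA (x y : mc_sort X) := g (cpt x false) (cpt y false).
Definition gB (x y : mc_sort X) := g (cpt x false) (cpt y true).
Definition gC (x y : mc_sort X) :=
  ereal_inf [set gB x z + gB z y | z in [set: mc_sort X]].

Lemma gAB x y i j : g (cpt x i) (cpt y j) = if i == j then gA x y else gB x y.
Proof.
rewrite /gA /gB; case: i; case: j => /=; last by [].
- exact: (Hsym x y true true).
- exact: (Hsym x y true false).
- by [].
Qed.

Lemma gA_ge0 x y : 0 <= gA x y. Proof. exact: gge0. Qed.
Lemma gB_ge0 x y : 0 <= gB x y. Proof. exact: gge0. Qed.
Lemma gC_ge0 x y : 0 <= gC x y.
Proof. by apply: le_ereal_inf_tmp => _ [z _ <-]; apply: adde_ge0; exact: gge0. Qed.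

Lemma tAAA x w y : gA x y <= gA x w + gA w y. Proof. exact: gtr. Qed.
Lemma tABB x w y : gA x y <= gB x w + gB w y.
Proof.
have -> : gB w y = g (cpt w true) (cpt y false) by rewrite gAB.
exact: gtr.
Qed.
Lemma CgeA x y : gA x y <= gC x y.
Proof. by apply: le_ereal_inf_tmp => _ [z _ <-]; exact: tABB. Qed.
Lemma tACC x w y : gA x y <= gC x w + gC w y.
Proof. by apply: (le_trans (tAAA x w y)); apply: leeD; exact: CgeA. Qed.
Lemma tBAB x w y : gB x y <= gA x w + gB w y. Proof. exact: gtr. Qed.
Lemma tBBA x w y : gB x y <= gB x w + gA w y.
Proof.
have -> : gA w y = g (cpt w true) (cpt y true) by rewrite gAB.
exact: gtr.
Qed.
Lemma tBCB x w y : gB x y <= gC x w + gB w y.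
Proof. by apply: (le_trans (tBAB x w y)); apply: leeD2r; exact: CgeA. Qed.
Lemma tBBC x w y : gB x y <= gB x w + gC w y.
Proof. by apply: (le_trans (tBBA x w y)); apply: leeD2l; exact: CgeA. Qed.
Lemma tCBB x w y : gC x y <= gB x w + gB w y.
Proof. by apply: ereal_inf_lbound; exists w. Qed.
Lemma tCAC x w y : gC x y <= gA x w + gC w y.
Proof.
apply: infL => [|z|z]; [exact: gA_ge0 | by apply: adde_ge0; exact: gge0 |].
rewrite addeA; apply: (le_trans (tCBB x z y)); apply: leeD2r; exact: tBAB.
Qed.
Lemma tCCA x w y : gC x y <= gC x w + gA w y.
Proof.
apply: infR => [|z|z]; [exact: gA_ge0 | by apply: adde_ge0; exact: gge0 |].
rewrite -addeA; apply: (le_trans (tCBB x z y)); apply: leeD2l; exact: tBBA.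
Qed.


Definition T3 : topologicalType := {k : option bool & (fun _ => mc_sort X) k}.
Definition pos (k : option bool) : nat :=
  match k with Some false => 0 | None => 1 | Some true => 2 end.
Definition gap (k l : option bool) : nat := (pos k - pos l) + (pos l - pos k).
Definition gD (n : nat) (x y : mc_sort X) : \bar R :=
  match n with 0 => gA x y | 1 => gB x y | _ => gC x y end.
Definition del (u v : T3) : \bar R := gD (gap (projT1 u) (projT1 v)) (projT2 u) (projT2 v).

Lemma gD_ge0 n x y : 0 <= gD n x y.
Proof. by case: n => [|[|n]]; [exact: gA_ge0 | exact: gB_ge0 | exact: gC_ge0]. Qed.

Lemma del_metric : is_metric del.
Proof.
split.
- by move=> [k x]; rewrite /del /gap subnn /=; exact: g0.
- move=> [k x] [l w] [m y]; rewrite /del /=.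
  by case: k => [[]|]; case: l => [[]|]; case: m => [[]|]; rewrite /gap /=;
    first [exact: tAAA | exact: tABB | exact: tACC | exact: tBAB | exact: tBBA
          | exact: tBCB | exact: tBBC | exact: tCBB | exact: tCAC | exact: tCCA].
- by move=> [k x] [l y]; exact: gD_ge0.
Qed.


Lemma cpt_cont i : continuous (fun x : mc_sort X => cpt x i).
Proof. exact: existT_continuous. Qed.

Lemma open_gij (c : R) i j :
  open [set p : mc_sort X * mc_sort X | c%:E < g (cpt p.1 i) (cpt p.2 j)].
Proof.
have -> : [set p : mc_sort X * mc_sort X | c%:E < g (cpt p.1 i) (cpt p.2 j)] =
  (fun p : mc_sort X * mc_sort X => (cpt p.1 i, cpt p.2 j)) @^-1`
     [set q : cop (mc_sort X) * cop (mc_sort X) | c%:E < g q.1 q.2] by [].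
apply: open_comp; last exact: bs_continuous.
move=> p _; apply: (@cvg_pair _ _ _ _ (nbhs (cpt p.1 i)) (nbhs (cpt p.2 j))).
  by apply: cvg_comp; [exact: cvg_fst | exact: cpt_cont].
by apply: cvg_comp; [exact: cvg_snd | exact: cpt_cont].
Qed.


Lemma open_C (c : R) : open [set p : mc_sort X * mc_sort X | c%:E < gC p.1 p.2].
Proof.
rewrite openE => -[x0 y0] /= h.
have [v [cv vC]] := exists_between h.
have hz : forall z, v%:E < gB x0 z + gB z y0.
  by move=> z; apply: (lt_le_trans vC); exact: tCBB.
have cond : forall z, [set: mc_sort X] z ->
  \forall z' \near z & p \near nbhs (x0, y0),
     v%:E <= gB p.1 z' + gB z' p.2.
  move=> z _.
  have [a' [b' [ha hb ab]]] := split_lt (gB_ge0 x0 z) (gB_ge0 z y0) (hz z).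
  have n1 : nbhs (x0, z) [set q : mc_sort X * mc_sort X | a'%:E < gB q.1 q.2].
    by apply: open_nbhs_nbhs; split; [exact: open_gij | exact: ha].
  have n2 : nbhs (z, y0) [set q : mc_sort X * mc_sort X | b'%:E < gB q.1 q.2].
    by apply: open_nbhs_nbhs; split; [exact: open_gij | exact: hb].
  case: n1 => -[U1 V1] [/= nU1 nV1] sub1.
  case: n2 => -[U2 V2] [/= nU2 nV2] sub2.
  exists (V1 `&` U2, U1 `*` V2) => /=.
    split; first exact: filterI.
    by exists (U1, V2).
  move=> [z' p] /= [[hV1 hU2] [hU1 hV2]].
  have e1 : a'%:E < gB p.1 z' := sub1 (p.1, z') (conj hU1 hV1).
  have e2 : b'%:E < gB z' p.2 := sub2 (z', p.2) (conj hU2 hV2).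
  by rewrite -ab EFinD; apply/ltW; exact: lteD e1 e2.
have := (compact_near_coveringP _).1 (@mc_compact _ X) (mc_sort X * mc_sort X)%type
   (nbhs (x0, y0)) (fun p z => v%:E <= gB p.1 z + gB z p.2) _ cond.
move=> hcov.
apply: (@filterS _ _ _ (fun p => [set: mc_sort X] `<=` (fun z => v%:E <= gB p.1 z + gB z p.2))); last exact: hcov.
move=> p hp /=.
apply: (@lt_le_trans _ _ v%:E); first by rewrite lte_fin.
by apply: le_ereal_inf_tmp => _ [z _ <-]; exact: hp z I.
Qed.


Lemma open_gD n (c : R) :
  open [set p : mc_sort X * mc_sort X | c%:E < gD n p.1 p.2].
Proof. case: n => [|[|n]] /=; [exact: open_gij | exact: open_gij | exact: open_C]. Qed.

Lemma del_cont : upper_continuous del.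
Proof.
move=> c; rewrite openE => -[[k x] [l y]] /= h.
have : nbhs (x, y) [set p : mc_sort X * mc_sort X | c%:E < gD (gap k l) p.1 p.2].
  by apply: open_nbhs_nbhs; split; [exact: open_gD | exact: h].
case=> -[U V] [/= nU nV] sub.
exists (existT _ k @` U, existT _ l @` V) => /=.
  by split; exact: existT_nbhs.
by move=> [u v] /= [[x' Ux' <-] [y' Vy' <-]]; exact: (sub (x', y') (conj Ux' Vy')).
Qed.

Lemma T3_compact : compact [set: T3].
Proof. by apply: sigT_compact => [|i]; [exact: finite_finset | exact: mc_compact]. Qed.

Lemma T3_hausdorff : hausdorff_space T3.
Proof. by apply: sigT_hausdorff => i; exact: mc_hausdorff. Qed.

Definition P3 : MetCH R := QMet del_metric del_cont T3_compact T3_hausdorff.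


Definition piS (u : cop (mc_sort X)) : corel_S g := \pi_{eq_quot (sim_g_equiv g)} u.

Lemma piSK (a : corel_S g) : piS (repr a) = a.
Proof. exact: reprK. Qed.

Lemma piS_eq u v : (piS u = piS v) <-> sim_g g u v.
Proof.
split => [h|h]; first by apply/(eqquotP {eq_quot (sim_g_equiv g)}).
by apply/(eqquotP {eq_quot (sim_g_equiv g)}).
Qed.

Lemma repr_piS u : sim_g g (repr (piS u)) u.
Proof. by apply/piS_eq; rewrite piSK. Qed.

Lemma g_siml u u' v : sim_g g u u' -> g u v = g u' v.
Proof.
move=> /andP[/eqP h1 /eqP h2]; apply/eqP; rewrite eq_le.
have := gtr u u' v; have := gtr u' u v; rewrite h1 h2 !add0e => -> ->//.
Qed.
Lemma g_simr u v v' : sim_g g v v' -> g u v = g u v'.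
Proof.
move=> /andP[/eqP h1 /eqP h2]; apply/eqP; rewrite eq_le.
have := gtr u v v'; have := gtr u v' v; rewrite h1 h2 !adde0 => -> ->//.
Qed.

Lemma dS_pi u v : corel_d g (piS u) (piS v) = g u v.
Proof.
by rewrite /corel_d (g_siml _ (repr_piS u)) (g_simr _ (repr_piS v)).
Qed.

Lemma piS_cont : continuous piS.
Proof. exact: pi_continuous. Qed.

Lemma q_cont i : continuous (corel_q g i).
Proof.
move=> x; apply: cvg_comp; [exact: cpt_cont | exact: piS_cont].
Qed.

Lemma qE i x : corel_q g i x = piS (cpt x i). Proof. by []. Qed.


Definition pi3 (u : T3) : mc_sort P3 := piQ del_metric u.

Lemma d3_pi u v : mc_d P3 (pi3 u) (pi3 v) = del u v.
Proof. exact: dQ_pi. Qed.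

Lemma pi3_eq u v : pi3 u = pi3 v <-> (del u v == 0) && (del v u == 0).
Proof. exact: piQ_eq. Qed.

Lemma pi3K (a : mc_sort P3) : pi3 (repr a) = a.
Proof. exact: piQK. Qed.

Lemma repr_pi3 u : (del (repr (pi3 u)) u == 0) && (del u (repr (pi3 u)) == 0).
Proof. exact: repr_piQ. Qed.

Lemma pi3_cont : continuous pi3.
Proof. exact: piQ_cont. Qed.

Definition embk (k : bool -> option bool) (u : cop (mc_sort X)) : T3 :=
  existT _ (k (projT1 u)) (projT2 u).

Lemma embk_cont k : continuous (embk k).
Proof.
have -> : embk k = unstable.sigT_fun (fun i (x : mc_sort X) => (existT _ (k i) x : T3)).
  by apply/funext => -[].
by apply: sigT_continuous => i; exact: existT_continuous.
Qed.

Lemma liftS (F : cop (mc_sort X) -> T3) : continuous F ->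
  (forall u v, del (F u) (F v) = g u v) ->
  is_mor (corel_d g) (mc_d P3) (fun a => pi3 (F (repr a))) /\
  forall u, pi3 (F (repr (piS u))) = pi3 (F u).
Proof.
move=> cF hF.
have hpi : forall u, pi3 (F (repr (piS u))) = pi3 (F u).
  move=> u; apply/pi3_eq; rewrite !hF.
  by have /andP[/eqP -> /eqP ->] := repr_piS u; rewrite eqxx.
split => //; split.
- apply/quotient_continuous.
  have -> : ((fun a => pi3 (F (repr a))) \o \pi_(corel_S g)) = pi3 \o F.
    by apply/funext => u /=; exact: hpi.
  by move=> u; apply: cvg_comp; [exact: cF | exact: pi3_cont].
- by move=> a b; rewrite d3_pi hF.
Qed.


Definition k0 (i : bool) : option bool := if i then None else Some false.
Definition k1 (i : bool) : option bool := if i then Some true else None.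
Definition kt (i : bool) : option bool := if i then Some true else Some false.

Lemma del_k0 u v : del (embk k0 u) (embk k0 v) = g u v.
Proof.
case: u => i x; case: v => j y.
change (g (existT _ i x) (existT _ j y)) with (g (cpt x i) (cpt y j)).
by rewrite gAB; case: i; case: j.
Qed.

Lemma del_k1 u v : del (embk k1 u) (embk k1 v) = g u v.
Proof.
case: u => i x; case: v => j y.
change (g (existT _ i x) (existT _ j y)) with (g (cpt x i) (cpt y j)).
by rewrite gAB; case: i; case: j.
Qed.

Lemma del_kt (hBC : forall x y, gB x y = gC x y) u v :
  del (embk kt u) (embk kt v) = g u v.
Proof.
case: u => i x; case: v => j y.
change (g (existT _ i x) (existT _ j y)) with (g (cpt x i) (cpt y j)).
by rewrite gAB; case: i; case: j => //=; rewrite hBC.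
Qed.

Definition L0 (a : corel_S g) : mc_sort P3 := pi3 (embk k0 (repr a)).
Definition L1 (a : corel_S g) : mc_sort P3 := pi3 (embk k1 (repr a)).

Lemma L0_mor : is_mor (corel_d g) (mc_d P3) L0.
Proof. by have := (liftS (@embk_cont k0) del_k0).1. Qed.
Lemma L1_mor : is_mor (corel_d g) (mc_d P3) L1.
Proof. by have := (liftS (@embk_cont k1) del_k1).1. Qed.
Lemma L0_pi u : L0 (piS u) = pi3 (embk k0 u).
Proof. exact: ((liftS (@embk_cont k0) del_k0).2 u). Qed.
Lemma L1_pi u : L1 (piS u) = pi3 (embk k1 u).
Proof. exact: ((liftS (@embk_cont k1) del_k1).2 u). Qed.


Lemma P3_pushout : is_pushout g P3 L0 L1.
Proof.
split; [exact: L0_mor | exact: L1_mor | |].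
  by move=> x; rewrite !qE L0_pi L1_pi.
move=> Y f0 f1 [cf0 nf0] [cf1 nf1] hf.
have [dY0 dYtr dYge0] := @mc_is_metric _ Y.
have Ysep := @mc_separated _ Y.
pose hh (u : T3) : mc_sort Y :=
  match projT1 u with
  | Some false => f0 (corel_q g false (projT2 u))
  | None => f0 (corel_q g true (projT2 u))
  | Some true => f1 (corel_q g true (projT2 u)) end.
have b0 : forall x y i j, mc_d Y (f0 (corel_q g i x)) (f0 (corel_q g j y)) <=
    g (cpt x i) (cpt y j).
  by move=> x y i j; apply: (le_trans (nf0 _ _)); rewrite !qE dS_pi.
have b1 : forall x y i j, mc_d Y (f1 (corel_q g i x)) (f1 (corel_q g j y)) <=
    g (cpt x i) (cpt y j).
  by move=> x y i j; apply: (le_trans (nf1 _ _)); rewrite !qE dS_pi.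
have hh_ne : forall u v, mc_d Y (hh u) (hh v) <= del u v.
  move=> [k x] [l y]; case: k => [[]|]; case: l => [[]|]; rewrite /hh /del /gap /=.
  - by apply: (le_trans (b1 _ _ _ _)); rewrite gAB.
  - apply: le_ereal_inf_tmp => _ [z _ <-].
    apply: (le_trans (dYtr _ (f1 (corel_q g false z)) _)); apply: leeD.
      by apply: (le_trans (b1 _ _ _ _)); rewrite gAB.
    by rewrite -hf; apply: (le_trans (b0 _ _ _ _)); rewrite gAB.
  - by rewrite hf; apply: (le_trans (b1 _ _ _ _)); rewrite gAB.
  - apply: le_ereal_inf_tmp => _ [z _ <-].
    apply: (le_trans (dYtr _ (f0 (corel_q g true z)) _)); apply: leeD.
      by apply: (le_trans (b0 _ _ _ _)); rewrite gAB.
    by rewrite hf; apply: (le_trans (b1 _ _ _ _)); rewrite gAB.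
  - by apply: (le_trans (b0 _ _ _ _)); rewrite gAB.
  - by apply: (le_trans (b0 _ _ _ _)); rewrite gAB.
  - by rewrite hf; apply: (le_trans (b1 _ _ _ _)); rewrite gAB.
  - by apply: (le_trans (b0 _ _ _ _)); rewrite gAB.
  - by apply: (le_trans (b0 _ _ _ _)); rewrite gAB.
have hh_eq : forall u v, del u v = 0 -> del v u = 0 -> hh u = hh v.
  move=> u v e1 e2; apply: Ysep; apply/eqP; rewrite eq_le dYge0 andbT.
    by rewrite -e1 hh_ne.
  by rewrite -e2 hh_ne.
pose h (p : mc_sort P3) : mc_sort Y := hh (repr p).
have hpi : forall u, h (pi3 u) = hh u.
  move=> u; have /andP[/eqP e1 /eqP e2] := repr_pi3 u; exact: hh_eq.
have hcont : continuous hh.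
  have -> : hh = unstable.sigT_fun (fun k (x : mc_sort X) =>
      match k with
      | Some false => f0 (corel_q g false x)
      | None => f0 (corel_q g true x)
      | Some true => f1 (corel_q g true x) end).
    by apply/funext => -[].
  apply: sigT_continuous => -[[]|] x /=;
    by apply: cvg_comp; [exact: q_cont | first [exact: cf0 | exact: cf1]].
have hk0 : forall u, hh (embk k0 u) = f0 (piS u) by move=> [[] x].
have hk1 : forall u, hh (embk k1 u) = f1 (piS u).
  by move=> [[] x] //=; exact: (hf x).
exists h; split.
- split.
    apply/quotient_continuous.
    have -> : (h \o \pi_(mc_sort P3)) = hh by apply/funext => u /=; exact: hpi.
    exact: hcont.
  by move=> a b; exact: hh_ne.
- by move=> a; rewrite /L0 hpi hk0 piSK.
- by move=> a; rewrite /L1 hpi hk1 piSK.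
move=> h' _ e0 e1; apply/funext => p.
rewrite -(pi3K p) hpi; case: (repr p) => -[[]|] x /=.
- have -> : pi3 (existT _ (Some true) x) = L1 (corel_q g true x) by rewrite qE L1_pi.
  exact: e1.
- have -> : pi3 (existT _ (Some false) x) = L0 (corel_q g false x) by rewrite qE L0_pi.
  exact: e0.
- have -> : pi3 (existT _ None x) = L0 (corel_q g true x) by rewrite qE L0_pi.
  exact: e0.
Qed.


Lemma P3_trans (hBC : forall x y, gB x y = gC x y) : corel_transitive g.
Proof.
exists P3, L0, L1; split; first exact: P3_pushout.
have [tm tpi] := liftS (@embk_cont kt) (del_kt hBC).
exists (fun a => pi3 (embk kt (repr a))); split => // x.
by rewrite !qE tpi L0_pi L1_pi.
Qed.

Lemma L0L1_dist x y :
  mc_d P3 (L0 (corel_q g false x)) (L1 (corel_q g true y)) = gC x y.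
Proof. by rewrite !qE L0_pi L1_pi d3_pi. Qed.

End Three.


Section MainSec.
Context {R : realType} (X : MetCH R) (g : bin_submetric X).

Let g0 u : g u u = 0. Proof. by case: (bs_is_metric g). Qed.
Let gtr u v w : g u w <= g u v + g v w. Proof. by case: (bs_is_metric g). Qed.
Let gge0 u v : 0 <= g u v. Proof. by case: (bs_is_metric g). Qed.

Lemma gle_d x y i : g (cpt x i) (cpt y i) <= mc_d X x y.
Proof. by have := bs_below g (cpt x i) (cpt y i); rewrite /cop_d /= eqxx. Qed.

Lemma sim_same_point (c1 : forall x y i j, mc_d X x y <= g (cpt x i) (cpt y j))
  u v : sim_g g u v -> projT2 u = projT2 v.
Proof.
case: u => i x; case: v => j y /andP[/eqP e1 /eqP e2] /=.
have [_ _ dge0] := @mc_is_metric _ X.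
apply: (@mc_separated _ X); apply/eqP; rewrite eq_le dge0 andbT.
  by rewrite -e1; exact: (c1 x y i j).
by rewrite -e2; exact: (c1 y x j i).
Qed.

Lemma forward : equivalence_submetric g ->
  ((forall (x y : mc_sort X) (i j : bool),
      mc_d X x y <= g (cpt x i) (cpt y j) /\
      g (cpt x i) (cpt y j) = g (cpt x (~~ i)) (cpt y (~~ j))) /\
   (forall (x y : mc_sort X) (i : bool),
      g (cpt x i) (cpt y (~~ i)) =
      ereal_inf [set g (cpt x i) (cpt z (~~ i)) + g (cpt z i) (cpt y (~~ i))
                | z in [set: mc_sort X]])).
Proof.
case=> [[e [[ce ne] he]] [s [[cs ns] hs]] [P [l0 [l1 [po [t [[ct nt] ht]]]]]]].
have eq_e x i : e (corel_q g i x) = x by case: i; [exact: (he x).2 | exact: (he x).1].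
have eq_s x i : s (corel_q g i x) = corel_q g (~~ i) x.
  by case: i; [exact: (hs x).2 | exact: (hs x).1].
have c1 : forall x y i j, mc_d X x y <= g (cpt x i) (cpt y j).
  move=> x y i j; have := ne (corel_q g i x) (corel_q g j y).
  by rewrite !eq_e !qE dS_pi.
have sle : forall x y i j, g (cpt x (~~ i)) (cpt y (~~ j)) <= g (cpt x i) (cpt y j).
  move=> x y i j; have := ns (corel_q g i x) (corel_q g j y).
  by rewrite !eq_s !qE !dS_pi.
have Hsym : forall x y i j, g (cpt x i) (cpt y j) = g (cpt x (~~ i)) (cpt y (~~ j)).
  move=> x y i j; apply/eqP; rewrite eq_le sle.
  by have := sle x y (~~ i) (~~ j); rewrite !negbK => ->.
have BC : forall x y, gB g x y = gC g x y.
  move=> x y; apply/eqP; rewrite eq_le; apply/andP; split.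
    apply: le_ereal_inf_tmp => _ [z _ <-].
    apply: (le_trans (gtr _ (cpt z true) _)); apply: leeD2l.
    exact: (le_trans (gle_d _ _ _) (c1 _ _ _ _)).
  have [_ _ _ up] := po.
  have [m0 m1 m01 _] := P3_pushout Hsym.
  have [h [[_ nh] hl0 hl1 _]] := up _ _ _ m0 m1 m01.
  rewrite -L0L1_dist -hl0 -hl1.
  apply: (le_trans (nh _ _)).
  rewrite -(ht x).1 -(ht y).2.
  by apply: (le_trans (nt _ _)); rewrite !qE dS_pi.
split; first by move=> x y i j; split; [exact: c1 | exact: Hsym].
move=> x y i.
rewrite (gAB Hsym) ifN; last by case: i.
rewrite BC /gC.
congr (ereal_inf (image _ _)); apply/funext => z.
by rewrite !(gAB Hsym) ifN //; case: i.
Qed.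


Lemma backward :
  ((forall (x y : mc_sort X) (i j : bool),
      mc_d X x y <= g (cpt x i) (cpt y j) /\
      g (cpt x i) (cpt y j) = g (cpt x (~~ i)) (cpt y (~~ j))) /\
   (forall (x y : mc_sort X) (i : bool),
      g (cpt x i) (cpt y (~~ i)) =
      ereal_inf [set g (cpt x i) (cpt z (~~ i)) + g (cpt z i) (cpt y (~~ i))
                | z in [set: mc_sort X]])) -> equivalence_submetric g.
Proof.
move=> [cc c2].
have c1 x y i j : mc_d X x y <= g (cpt x i) (cpt y j) by exact: (cc x y i j).1.
have Hsym x y i j : g (cpt x i) (cpt y j) = g (cpt x (~~ i)) (cpt y (~~ j)).
  exact: (cc x y i j).2.
have BC : forall x y, gB g x y = gC g x y by move=> x y; exact: (c2 x y false).
split.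
-
  exists (fun a => projT2 (repr a)); split; last first.
    move=> x; rewrite !qE.
    split; [exact: (sim_same_point c1 (repr_piS g (cpt x false)))
           | exact: (sim_same_point c1 (repr_piS g (cpt x true)))].
  split.
    apply/quotient_continuous.
    have -> : ((fun a : corel_S g => projT2 (repr a)) \o \pi_(corel_S g)) =
              unstable.sigT_fun (fun i (x : mc_sort X) => x).
      apply/funext => u /=; apply: (sim_same_point c1); exact: repr_piS.
    by apply: sigT_continuous => i x; exact: cvg_id.
  move=> a b; rewrite /corel_d; case: (repr a) => i x; case: (repr b) => j y.
  exact: c1.
-
  pose sw (u : cop (mc_sort X)) : cop (mc_sort X) := existT _ (~~ projT1 u) (projT2 u).
  have gsw u v : g (sw u) (sw v) = g u v.
    by case: u => i x; case: v => j y; exact: (esym (Hsym x y i j)).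
  have hpi u : piS g (sw (repr (piS g u))) = piS g (sw u).
    apply/piS_eq; rewrite /sim_g !gsw.
    by have := repr_piS g u.
  exists (fun a => piS g (sw (repr a))); split; last first.
    by move=> x; rewrite !qE !hpi.
  split.
    apply/quotient_continuous.
    have -> : ((fun a : corel_S g => piS g (sw (repr a))) \o \pi_(corel_S g)) =
              piS g \o sw by apply/funext => u /=; exact: hpi.
    have csw : continuous sw.
      have -> : sw = unstable.sigT_fun (fun i (x : mc_sort X) =>
           (existT _ (~~ i) x : cop (mc_sort X))) by apply/funext => -[].
      by apply: sigT_continuous => i; exact: existT_continuous.
    by move=> u; apply: cvg_comp; [exact: csw | exact: piS_cont].
  by move=> a b; rewrite dS_pi gsw.
- exact: (P3_trans Hsym BC).
Qed.

End MainSec.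

Unset Implicit Arguments.
Local Close Scope quotient_scope.

Theorem theorem5p8 (R : realType) (X : MetCH R) (g : bin_submetric X) :
  equivalence_submetric g <->
  ((forall (x y : mc_sort X) (i j : bool),
      mc_d X x y <= g (cpt x i) (cpt y j) /\
      g (cpt x i) (cpt y j) = g (cpt x (~~ i)) (cpt y (~~ j))) /\
   (forall (x y : mc_sort X) (i : bool),
      g (cpt x i) (cpt y (~~ i)) =
      ereal_inf [set g (cpt x i) (cpt z (~~ i)) + g (cpt z i) (cpt y (~~ i))
                | z in [set: mc_sort X]])).
Proof. by split; [exact: forward | exact: backward]. Qed.
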